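(* Let $K(z,u)=(u-1)^2(1-zu^2)-zu^3$ and, for real $x\in(0,1/12)$, let $u_1(x)\in(1,2)$ and $u_2(x)\in(0,1)$ be the unique real roots of $u\mapsto K(x,u)$ in these intervals. Fix $\theta\in(0,2\pi)$ and let $D(\theta)=\{z\in\mathbb C:|z|<4\}\setminus\big(\{re^{\mathrm i\theta}:r\ge0\}\cup[1/12,+\infty)\big)$. Then $u_1$ and $u_2$ have analytic continuations on $D(\theta)$. Moreover, $u_2$ is analytic at $z=1/12$ with $u_2(1/12)=(-3+\sqrt{21})/2$, while for $z$ approaching $1/12$ in $D(\theta)$, \[ u_1(z)=2-\sqrt{12/7}\cdot\sqrt{1-12z}+O(1-12z). \]
   Context: $\sqrt{\cdot}$ denotes the principal branch of the square root. *)

(* Defs.v *)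
From Stdlib Require Import Reals.
From Coquelicot Require Import Coquelicot.
Open Scope R_scope.

Definition Kr (x u : R) : R :=
  (u - 1) ^ 2 * (1 - x * u ^ 2) - x * u ^ 3.

(* f is holomorphic (complex differentiable, equivalently analytic)
   at every point of the (open) set U *)
Definition holomorphic_on (U : C -> Prop) (f : C -> C) : Prop :=
  forall z, U z -> @ex_derive C_AbsRing C_NormedModule f z.

Definition Dtheta (theta : R) (z : C) : Prop :=
  Cmod z < 4 /\
  ~ (exists r : R, 0 <= r /\ z = (r * cos theta, r * sin theta)) /\
  ~ (snd z = 0 /\ 1 / 12 <= fst z).

Definition Csqrt (w : C) : C :=
  (sqrt ((Cmod w + fst w) / 2),
   (if Rle_dec 0 (snd w) then 1 else -1) * sqrt ((Cmod w - fst w) / 2)).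

(* Main.v *)
Require Import Defs.
From Stdlib Require Import Reals Lra Psatz.
From Coquelicot Require Import Coquelicot.
Open Scope R_scope.

Lemma quad_deriv (f : C -> C) (x l : C) (K del : R) :
  0 < del ->
  (forall y, Cmod (y - x) < del -> Cmod (f y - f x - (y - x) * l) <= K * Cmod (y - x) ^ 2) ->
  @is_derive C_AbsRing C_NormedModule f x l.
Proof.
  intros Hdel H. split.
  - apply is_linear_scal_l.
  - intros x' Hx'. apply (@is_filter_lim_locally_unique C_AbsRing (AbsRing_NormedModule C_AbsRing)) in Hx'. subst x'.
    intros eps.
    assert (HK : 0 < Rabs K + 1) by (pose proof (Rabs_pos K); lra).
    set (r := Rmin del (eps / (Rabs K + 1))).
    assert (Hr : 0 < r).
    { unfold r. apply Rmin_pos; auto. apply Rdiv_lt_0_compat; auto. apply cond_pos. }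
    exists (mkposreal r Hr). simpl. intros y Hy.
    change (Cmod (y - x) < r) in Hy.
    change (Cmod (f y - f x - (y - x) * l) <= eps * Cmod (y - x)).
    eapply Rle_trans. apply H. unfold r in Hy. pose proof (Rmin_l del (eps / (Rabs K + 1))). lra.
    pose proof (Cmod_ge_0 (y-x)) as H0.
    assert (Hm2 : Cmod (y - x) <= eps / (Rabs K + 1)).
    { pose proof (Rmin_r del (eps / (Rabs K + 1))). unfold r in Hy. lra. }
    assert (K * Cmod (y - x) ^ 2 <= Rabs K * Cmod (y-x) * Cmod (y-x)).
    { pose proof (Rle_abs K). simpl. nra. }
    assert (Rabs K * Cmod (y-x) <= eps).
    { apply Rmult_le_compat_l with (r := Rabs K) in Hm2; [|apply Rabs_pos].
      eapply Rle_trans; [apply Hm2|]. 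
      apply Rle_trans with ((Rabs K + 1) * (eps / (Rabs K + 1))).
      apply Rmult_le_compat_r. apply Rlt_le, Rdiv_lt_0_compat; [apply cond_pos|lra]. lra.
      right. field. lra. }
    nra.
Qed.

Lemma Cmod_ab a b : Cmod (a, b) = sqrt (a ^ 2 + b ^ 2).
Proof. reflexivity. Qed.

Lemma Cmod_bounds a b : Rabs a <= Cmod (a, b) /\ Rabs b <= Cmod (a,b).
Proof.
  rewrite Cmod_ab. split.
  - rewrite <- sqrt_Rsqr_abs. apply sqrt_le_1_alt. unfold Rsqr. nra.
  - rewrite <- sqrt_Rsqr_abs. apply sqrt_le_1_alt. unfold Rsqr. nra.
Qed.

Lemma Csqrt_sq w : (Csqrt w * Csqrt w)%C = w.
Proof.
  destruct w as [a b]. unfold Csqrt. cbn [fst snd].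
  set (m := Cmod (a, b)).
  assert (Hm2 : m * m = a * a + b * b).
  { unfold m. rewrite Cmod_ab. rewrite sqrt_sqrt; nra. }
  destruct (Cmod_bounds a b) as [Ha Hb]. fold m in Ha, Hb.
  pose proof (Rle_abs a). pose proof (Rle_abs (-a)). rewrite Rabs_Ropp in *.
  assert (H1 : 0 <= (m + a) / 2) by lra.
  assert (H2 : 0 <= (m - a) / 2) by lra.
  set (x := sqrt ((m + a) / 2)). set (y := sqrt ((m - a) / 2)).
  assert (Hx : x * x = (m + a) / 2) by (apply sqrt_sqrt; lra).
  assert (Hy : y * y = (m - a) / 2) by (apply sqrt_sqrt; lra).
  assert (Hx0 : 0 <= x) by apply sqrt_pos.
  assert (Hy0 : 0 <= y) by apply sqrt_pos.
  assert (Hxy : x * y = Rabs b / 2).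
  { assert (E : (x*y)*(x*y) = (Rabs b / 2) * (Rabs b / 2)).
    { replace ((x*y)*(x*y)) with ((x*x)*(y*y)) by ring. rewrite Hx, Hy.
      replace ((Rabs b / 2) * (Rabs b / 2)) with ((Rabs b * Rabs b)/4) by field.
      rewrite <- Rabs_mult. rewrite Rabs_right by nra. nra. }
    pose proof (Rabs_pos b).
    assert (E2 : (x*y - Rabs b / 2) * (x*y + Rabs b / 2) = 0) by nra.
    apply Rmult_integral in E2. destruct E2. lra. assert (x * y = 0) by nra. nra. }
  unfold Cmult; cbn [fst snd].
  destruct (Rle_dec 0 b) as [Hb0|Hb0].
  - rewrite Rabs_right in Hxy by lra. f_equal; nra.
  - rewrite Rabs_left in Hxy by lra. f_equal; nra.
Qed.

Lemma Csqrt_re_nonneg w : 0 <= fst (Csqrt w).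
Proof. destruct w; unfold Csqrt; simpl; apply sqrt_pos. Qed.

Definition good (w : C) : Prop := 0 < fst w \/ snd w <> 0.

Lemma Csqrt_re_pos w : good w -> 0 < fst (Csqrt w).
Proof.
  destruct w as [a b]. unfold good, Csqrt; cbn [fst snd]. intros H.
  apply sqrt_lt_R0.
  destruct (Cmod_bounds a b) as [Ha Hb].
  pose proof (Rle_abs (-a)). rewrite Rabs_Ropp in *.
  destruct H as [H|H].
  - pose proof (Cmod_ge_0 (a,b)). lra.
  - assert (Hd : -a < Cmod (a,b)).
    { rewrite Cmod_ab. destruct (Rle_dec 0 a).
      assert (0 < sqrt (a^2+b^2)). apply sqrt_lt_R0. nra. lra.
      rewrite <- (Rabs_left a) by lra. rewrite <- sqrt_Rsqr_abs. apply sqrt_lt_1_alt. unfold Rsqr. split. nra. nra. }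
    lra.
Qed.

Lemma Csqrt_real x : 0 <= x -> Csqrt (x, 0) = (sqrt x, 0).
Proof.
  intros Hx. unfold Csqrt; cbn [fst snd].
  rewrite Cmod_ab. replace (x ^ 2 + 0 ^ 2) with (x * x) by ring. rewrite sqrt_square by lra.
  replace ((x + x) / 2) with x by field. replace ((x - x)/2) with 0 by field. rewrite sqrt_0.
  f_equal. ring.
Qed.

Lemma Csqrt_realC x : 0 <= x -> Csqrt (RtoC x) = RtoC (sqrt x).
Proof. intros. unfold RtoC. apply Csqrt_real; auto. Qed.

Lemma Csqrt_im_pos w : 0 <= snd w -> 0 <= snd (Csqrt w).
Proof.
  destruct w as [a b]. unfold Csqrt; cbn [fst snd]. intros H.
  destruct (Rle_dec 0 b); [|lra]. rewrite Rmult_1_l. apply sqrt_pos.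
Qed.

Lemma Csqrt_im_neg w : snd w < 0 -> snd (Csqrt w) <= 0.
Proof.
  destruct w as [a b]. unfold Csqrt; cbn [fst snd]. intros H.
  destruct (Rle_dec 0 b); [lra|]. pose proof (sqrt_pos ((Cmod (a, b) - a) / 2)). lra.
Qed.

Lemma re_le_Cmod' c : fst c <= Cmod c.
Proof. pose proof (re_le_Cmod c). pose proof (Rle_abs (fst c)). unfold Re in *. lra. Qed.

Lemma Csqrt_neq0 w : good w -> Csqrt w <> 0%C.
Proof. intros H E. apply Csqrt_re_pos in H. rewrite E in H. simpl in H. lra. Qed.

Lemma Cmod_Re_le c : fst c <= Cmod c.
Proof. apply re_le_Cmod'. Qed.

Lemma is_derive_Csqrt w : good w ->
  @is_derive C_AbsRing C_NormedModule Csqrt w (/ (2 * Csqrt w))%C.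
Proof.
  intros Hg. set (S := Csqrt w). set (rho := fst S).
  assert (Hrho : 0 < rho) by (apply Csqrt_re_pos; auto).
  assert (HS0 : S <> 0%C) by (apply Csqrt_neq0; auto).
  assert (HSm : rho <= Cmod S) by apply Cmod_Re_le.
  apply (quad_deriv _ _ _ (/ (2 * rho ^ 3)) 1). lra.
  intros y _. set (T := Csqrt y).
  assert (HT : 0 <= fst T) by apply Csqrt_re_nonneg.
  assert (Hy : y = (T * T)%C) by (symmetry; apply Csqrt_sq).
  assert (Hw : w = (S * S)%C) by (symmetry; apply Csqrt_sq).
  assert (E : (T - S - (y - w) * / (2 * S))%C = (- ((T - S) * (T - S)) * / (2 * S))%C).
  { rewrite Hy, Hw. field. auto. }
  fold S. rewrite E.
  assert (E2 : (y - w)%C = ((T - S) * (T + S))%C) by (rewrite Hy, Hw; ring).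
  assert (HTS : rho <= Cmod (T + S)).
  { eapply Rle_trans; [|apply Cmod_Re_le]. cbn [fst Cplus]. unfold rho. lra. }
  assert (M1 : Cmod (y - w) = Cmod (T - S) * Cmod (T + S)) by (rewrite E2; apply Cmod_mult).
  rewrite Cmod_mult, Cmod_opp, Cmod_mult, Cmod_inv.
  2:{ apply Cmod_gt_0. rewrite Cmod_mult, Cmod_R, Rabs_right by lra. lra. }
  rewrite Cmod_mult, Cmod_R, Rabs_right by lra.
  rewrite M1.
  assert (0 <= Cmod (T - S)) by apply Cmod_ge_0. set (a := Cmod (T - S)) in *. set (b := Cmod (T + S)) in *. set (c := Cmod S) in *. clearbody a b c rho.
  assert (Hc : 0 < c) by lra.
  rewrite Rinv_mult.
  assert (/ c <= / rho) by (apply Rinv_le_contravar; lra).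
  assert (0 < / c) by (apply Rinv_0_lt_compat; lra).
  assert (Hr3 : / (2 * rho ^ 3) = / 2 * / rho * (/ rho * / rho)) by (field; lra).
  rewrite Hr3.
  assert (a * a <= (a * b) ^ 2 * (/ rho * / rho)).
  { assert (a * rho <= a * b) by nra.
    assert (Ea : a * a = (a*rho)^2 * (/rho * /rho)) by (field; lra).
    rewrite Ea. apply Rmult_le_compat_r.
    assert (0 < / rho) by (apply Rinv_0_lt_compat; lra). nra.
    assert (0 <= a * rho) by nra. nra. }
  assert (0 < / 2) by lra.
  assert (0 <= a * a * (/ 2 * / c)) by (apply Rmult_le_pos; nra).
  apply Rle_trans with (a * a * (/ 2 * / rho)).
  apply Rmult_le_compat_l; nra.
  assert (0 <= / 2 * / rho) by (apply Rmult_le_pos; [lra| apply Rlt_le, Rinv_0_lt_compat; lra]).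
  apply Rle_trans with ((a * b) ^ 2 * (/ rho * / rho) * (/ 2 * / rho)).
  apply Rmult_le_compat_r; auto.
  right; ring.
Qed.

Lemma is_derive_Cinv (w : C) : w <> 0%C ->
  @is_derive C_AbsRing C_NormedModule Cinv w (- / (w * w))%C.
Proof.
  intros Hw. assert (Hm : 0 < Cmod w) by (apply Cmod_gt_0; auto).
  apply (quad_deriv _ _ _ (2 / Cmod w ^ 3) (Cmod w / 2)). lra.
  intros y Hy.
  assert (Hyw : Cmod w <= Cmod y + Cmod (y - w)).
  { replace w with (y - (y - w))%C at 1 by ring.
    eapply Rle_trans. apply Cmod_triangle. rewrite Cmod_opp. lra. }
  assert (Hy0 : y <> 0%C).
  { intro E. subst y. rewrite Cmod_0 in Hyw. lra. }
  assert (E : (/ y - / w - (y - w) * - / (w * w))%C = ((y - w) * (y - w) * / (y * (w * w)))%C).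
  { field. auto. }
  rewrite E, Cmod_mult, Cmod_mult, Cmod_inv, Cmod_mult, Cmod_mult.
  2:{ intro E0. apply (f_equal Cmod) in E0. rewrite !Cmod_mult, Cmod_0 in E0.
      assert (0 < Cmod y) by (apply Cmod_gt_0; auto). assert (0 < Cmod y * (Cmod w * Cmod w)) by (apply Rmult_lt_0_compat; [lra | apply Rmult_lt_0_compat; lra]). lra. }
  assert (0 < Cmod y) by (apply Cmod_gt_0; auto).
  assert (0 <= Cmod (y - w)) by apply Cmod_ge_0.
  set (d := Cmod (y - w)) in *. set (m := Cmod w) in *. set (n := Cmod y) in *. clearbody d m n.
  assert (n >= m / 2) by lra.
  apply Rle_trans with (d * d * (2 / (m * m * m))).
  - apply Rmult_le_compat_l. nra.
    rewrite <- Rinv_div. apply Rinv_le_contravar.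
    assert (0 < m * m * m) by (apply Rmult_lt_0_compat; [apply Rmult_lt_0_compat|]; lra). lra.
    apply Rle_trans with (m / 2 * (m * m)). right; field. apply Rmult_le_compat_r; nra.
  - right. field. lra.
Qed.

Notation HD f z := (@ex_derive C_AbsRing C_NormedModule f z).

Lemma exd_id (z : C) : HD (fun x => x) z.
Proof.
  exists (RtoC 1). apply (quad_deriv _ _ _ 0 1). lra. intros y _.
  match goal with |- Cmod ?e <= _ => replace e with (RtoC 0) by (simpl; ring) end. rewrite Cmod_0. nra.
Qed.

Lemma exd_const (c : C) (z : C) : HD (fun _ => c) z.
Proof.
  exists (RtoC 0). apply (quad_deriv _ _ _ 0 1). lra. intros y _.
  match goal with |- Cmod ?e <= _ => replace e with (RtoC 0) by (simpl; ring) end. rewrite Cmod_0. nra.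
Qed.

Lemma exd_plus f g z : HD f z -> HD g z -> HD (fun x => (f x + g x)%C) z.
Proof. intros [l1 H1] [l2 H2]. eexists. apply (@is_derive_plus C_AbsRing C_NormedModule f g z l1 l2 H1 H2). Qed.

Lemma exd_opp f z : HD f z -> HD (fun x => (- f x)%C) z.
Proof. intros [l1 H1]. eexists. apply (@is_derive_opp C_AbsRing C_NormedModule f z l1 H1). Qed.

Lemma transfer (f : C -> C) (z l : C) : @is_derive C_AbsRing (AbsRing_NormedModule C_AbsRing) f z l -> @is_derive C_AbsRing C_NormedModule f z l.
Proof. intros [_ H]. split. apply is_linear_scal_l. intros x Hx. specialize (H x Hx). intros eps. specialize (H eps). revert H. apply filter_imp. intros y Hy.
 change (Cmod (f y - f x - (y - x) * l) <= eps * Cmod (y - x)).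
 change (Cmod (f y - f x - (y - x) * l) <= eps * Cmod (y - x)) in Hy. exact Hy. Qed.
Lemma transfer2 (f : C -> C) (z l : C) : @is_derive C_AbsRing C_NormedModule f z l -> @is_derive C_AbsRing (AbsRing_NormedModule C_AbsRing) f z l.
Proof. intros [_ H]. split. apply is_linear_scal_l. intros x Hx. specialize (H x Hx). intros eps. specialize (H eps). revert H. apply filter_imp. intros y Hy.
 change (Cmod (f y - f x - (y - x) * l) <= eps * Cmod (y - x)).
 change (Cmod (f y - f x - (y - x) * l) <= eps * Cmod (y - x)) in Hy. exact Hy. Qed.

Lemma exd_mult f g z : HD f z -> HD g z -> HD (fun x => (f x * g x)%C) z.
Proof.
  intros [l1 H1] [l2 H2]. eexists. apply transfer. apply (@is_derive_mult C_AbsRing f g z l1 l2 (transfer2 _ _ _ H1) (transfer2 _ _ _ H2)).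
  intros; apply Cmult_comm.
Qed.

Lemma exd_comp f g z : HD f (g z) -> HD g z -> HD (fun x => f (g x)) z.
Proof. intros H1 [l2 H2]. apply (@ex_derive_comp C_AbsRing C_NormedModule f g z H1). exists l2. apply transfer2. exact H2. Qed.

Lemma exd_sqrt (g : C -> C) (z : C) : good (g z) -> HD g z -> HD (fun x => Csqrt (g x)) z.
Proof. intros Hg H. apply exd_comp; auto. eexists. apply is_derive_Csqrt; auto. Qed.

Lemma exd_inv (g : C -> C) (z : C) : g z <> 0%C -> HD g z -> HD (fun x => Cinv (g x)) z.
Proof. intros Hg H. apply exd_comp; auto. eexists. apply is_derive_Cinv; auto. Qed.


Lemma sqrt_lip u u0 : Cmod (Csqrt u - Csqrt u0) * fst (Csqrt u0) <= Cmod (u - u0).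
Proof.
  set (T := Csqrt u). set (S := Csqrt u0).
  assert (E : (u - u0)%C = ((T - S) * (T + S))%C).
  { unfold T, S. transitivity (Csqrt u * Csqrt u - Csqrt u0 * Csqrt u0)%C. rewrite !Csqrt_sq. reflexivity. ring. }
  rewrite E, Cmod_mult.
  assert (H1 : 0 <= fst T) by apply Csqrt_re_nonneg.
  assert (H2 : 0 <= fst S) by apply Csqrt_re_nonneg.
  assert (H3 : fst S <= Cmod (T + S)).
  { eapply Rle_trans; [|apply Cmod_Re_le]. change (fst S <= fst T + fst S). lra. }
  apply Rmult_le_compat_l. apply Cmod_ge_0. auto.
Qed.

Lemma good_of_re u : 0 < fst (Csqrt u) -> good u.
Proof.
  destruct u as [a b]. unfold good. cbn [fst snd]. intros H.
  destruct (Rlt_dec 0 a) as [Ha|Ha]; [left; auto|right]. intro Hb. subst b.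
  unfold Csqrt in H. cbn [fst snd] in H. rewrite Cmod_ab in H.
  replace (a ^ 2 + 0 ^ 2) with (Rsqr a) in H by (unfold Rsqr; ring). rewrite sqrt_Rsqr_abs in H.
  rewrite Rabs_left1 in H by lra. replace ((- a + a) / 2) with 0 in H by field. rewrite sqrt_0 in H. lra.
Qed.

Section Main.
Variable theta : R.
Definition sh := sin (theta / 2).
Definition ch := cos (theta / 2).
Definition cc : C := (sh, - ch).
Definition ee : C := (ch ^ 2 - sh ^ 2, - (2 * sh * ch)).
Definition sq (z : C) : C := (cc * Csqrt (- (z * ee)))%C.
Definition r4 (z : C) : C := Csqrt (z + RtoC 4)%C.
Definition gg (z : C) : C := (sq z * r4 z)%C.
Definition pp (k : C) (z : C) : C := (RtoC 1 + RtoC 2 * z + k * gg z)%C.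
Definition UU (k : C) (z : C) : C := (RtoC 2 * / (RtoC 1 + Csqrt (pp k z)))%C.

Lemma shch : sh ^ 2 + ch ^ 2 = 1.
Proof. unfold sh, ch. pose proof (sin2_cos2 (theta/2)). unfold Rsqr in H. lra. Qed.

Lemma hol_UU k z : good (- (z * ee))%C -> good (z + RtoC 4)%C -> good (pp k z) -> HD (UU k) z.
Proof.
  intros H1 H2 H3. unfold UU.
  apply exd_mult. apply exd_const.
  apply exd_inv.
  { intro E. pose proof (Csqrt_re_nonneg (pp k z)) as H. apply (f_equal fst) in E. change (1 + fst (Csqrt (pp k z)) = 0) in E. lra. }
  apply exd_plus. apply exd_const.
  apply exd_sqrt. exact H3.
  unfold pp. apply exd_plus. apply exd_plus. apply exd_const. apply exd_mult. apply exd_const. apply exd_id.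
  apply exd_mult. apply exd_const. unfold gg. apply exd_mult.
  - unfold sq. apply exd_mult. apply exd_const. apply exd_sqrt. exact H1.
    apply exd_opp. apply exd_mult. apply exd_id. apply exd_const.
  - unfold r4. apply exd_sqrt. exact H2. apply exd_plus. apply exd_id. apply exd_const.
Qed.


Lemma cc_ee : (cc * cc * ee)%C = (- RtoC 1)%C.
Proof.
  pose proof shch. unfold cc, ee, Cmult, Copp, RtoC. cbn [fst snd].
  apply injective_projections; cbn [fst snd].
  - replace (ch ^ 2) with (1 - sh ^ 2) by lra. ring_simplify. replace (ch ^ 2) with (1 - sh ^ 2) by lra. ring.
  - ring.
Qed.

Lemma sq_sq z : (sq z * sq z)%C = z.
Proof.
  unfold sq. transitivity (cc * cc * (Csqrt (- (z * ee)) * Csqrt (- (z * ee))))%C. ring.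
  rewrite Csqrt_sq. transitivity (- (cc * cc * ee) * z)%C. ring. rewrite cc_ee. ring.
Qed.

Lemma gg_sq z : (gg z * gg z)%C = (z * (z + RtoC 4))%C.
Proof.
  unfold gg, r4. transitivity ((sq z * sq z) * (Csqrt (z + RtoC 4) * Csqrt (z + RtoC 4)))%C. ring.
  rewrite sq_sq, Csqrt_sq. reflexivity.
Qed.

Lemma pp_rel k z : (k * k)%C = RtoC 4 ->
  ((RtoC 1 - pp k z) * (RtoC 1 - pp k z))%C = (RtoC 4 * z * (RtoC 3 + pp k z))%C.
Proof.
  intros Hk. unfold pp.
  transitivity (RtoC 4 * z * z + RtoC 4 * k * z * gg z + (k * k) * (gg z * gg z))%C. ring.
  rewrite Hk, gg_sq.
  ring.
Qed.


Lemma Csqrt_half x : 0 <= x -> 0 < sh ->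
  Csqrt (- (RtoC x * ee))%C = (sqrt x * sh, sqrt x * ch).
Proof.
  intros Hx Hs. pose proof shch as Hsc.
  assert (E : (- (RtoC x * ee))%C = (- (x * (ch ^ 2 - sh ^ 2)), 2 * x * sh * ch)).
  { unfold RtoC, ee, Cmult, Copp. apply injective_projections; cbn [fst snd]; ring. }
  rewrite E. unfold Csqrt. cbn [fst snd]. rewrite Cmod_ab.
  replace ((- (x * (ch ^ 2 - sh ^ 2))) ^ 2 + (2 * x * sh * ch) ^ 2) with (x * x).
  2:{ replace (ch ^ 2) with (1 - sh ^ 2) by lra. ring_simplify. replace (ch ^ 2) with (1 - sh ^ 2) by lra. ring. }
  rewrite sqrt_square by lra.
  replace ((x + - (x * (ch ^ 2 - sh ^ 2))) / 2) with (x * (sh * sh)) by (field_simplify; nra).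
  replace ((x - - (x * (ch ^ 2 - sh ^ 2))) / 2) with (x * (ch * ch)) by (field_simplify; nra).
  rewrite (sqrt_mult_alt x (sh*sh)) by lra. rewrite (sqrt_mult_alt x (ch*ch)) by lra. rewrite (sqrt_square sh) by lra. f_equal.
  destruct (Rle_dec 0 (2 * x * sh * ch)) as [H|H].
  - destruct (Rle_dec 0 ch) as [Hc|Hc].
    + rewrite sqrt_square by lra. ring.
    + destruct (Req_dec x 0) as [Hx0|Hx0].
      * subst x. rewrite sqrt_0. ring.
      * exfalso. assert (0 < x) by lra. assert (0 < x * sh) by nra. nra.
  - destruct (Rle_dec 0 ch) as [Hc|Hc].
    + exfalso. apply H. assert (0 <= x * sh) by nra. nra.
    + replace (ch * ch) with ((- ch) * (- ch)) by ring. rewrite sqrt_square by lra. ring.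
Qed.

Lemma sq_real x : 0 <= x -> 0 < sh -> sq (RtoC x) = RtoC (sqrt x).
Proof.
  intros Hx Hs. unfold sq. rewrite Csqrt_half by auto. pose proof shch.
  unfold cc, Cmult, RtoC. apply injective_projections; cbn [fst snd].
  - transitivity (sqrt x * (sh^2 + ch^2)). ring. rewrite H; ring.
  - ring.
Qed.

Lemma r4_real x : 0 <= x -> r4 (RtoC x) = RtoC (sqrt (x + 4)).
Proof.
  intros Hx. unfold r4. replace (RtoC x + RtoC 4)%C with (RtoC (x + 4)).
  apply Csqrt_real; lra. unfold RtoC, Cplus. cbn [fst snd]. f_equal. ring.
Qed.

Lemma pp_real (k x : R) : 0 <= x -> 0 < sh ->
  pp (RtoC k) (RtoC x) = RtoC (1 + 2 * x + k * (sqrt x * sqrt (x + 4))).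
Proof.
  intros Hx Hs. unfold pp, gg. rewrite sq_real, r4_real by auto.
  unfold RtoC, Cplus, Cmult. apply injective_projections; cbn [fst snd]; ring.
Qed.

Lemma sh_le : sh ^ 2 <= 1.
Proof. pose proof shch. nra. Qed.

Lemma UU_real (k x : R) : 0 <= x -> 0 < sh -> 0 <= 1 + 2 * x + k * (sqrt x * sqrt (x + 4)) ->
  UU (RtoC k) (RtoC x) = RtoC (2 / (1 + sqrt (1 + 2 * x + k * (sqrt x * sqrt (x + 4))))).
Proof.
  intros Hx Hs Hp. unfold UU. rewrite pp_real by auto. rewrite Csqrt_realC by auto.
  set (q := sqrt (1 + 2 * x + k * (sqrt x * sqrt (x + 4)))).
  assert (0 <= q) by apply sqrt_pos.
  replace (RtoC 1 + RtoC q)%C with (RtoC (1 + q)) by (unfold RtoC, Cplus; cbn [fst snd]; f_equal; ring).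
  rewrite <- RtoC_inv by lra. rewrite <- RtoC_mult. reflexivity.
Qed.

Lemma cos_th : cos theta = ch ^ 2 - sh ^ 2.
Proof. unfold ch, sh. replace theta with (2 * (theta / 2)) at 1 by field. rewrite cos_2a. ring. Qed.

Lemma sin_th : sin theta = 2 * sh * ch.
Proof. unfold ch, sh. replace theta with (2 * (theta / 2)) at 1 by field. rewrite sin_2a. ring. Qed.

Lemma E12 : (ch ^ 2 - sh ^ 2) ^ 2 + (2 * sh * ch) ^ 2 = 1.
Proof. pose proof shch. replace (ch ^ 2) with (1 - sh ^ 2) by lra. ring_simplify. replace (ch ^ 2) with (1 - sh ^ 2) by lra. ring. Qed.

Lemma good_ray z : Dtheta theta z -> good (- (z * ee))%C.
Proof.
  intros [_ [HD _]]. destruct z as [a b].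
  set (E1 := ch ^ 2 - sh ^ 2). set (E2 := 2 * sh * ch).
  assert (HE : E1 ^ 2 + E2 ^ 2 = 1) by apply E12.
  assert (Ew : (- ((a, b) * ee))%C = (- (a * E1 + b * E2), - (- a * E2 + b * E1))).
  { unfold ee, Cmult, Copp, E1, E2. apply injective_projections; cbn [fst snd]; ring. }
  rewrite Ew. unfold good. cbn [fst snd].
  destruct (Rlt_dec 0 (- (a * E1 + b * E2))) as [H|H]; [left; auto|right].
  intro H0. apply HD. exists (a * E1 + b * E2). split. lra.
  rewrite cos_th, sin_th. fold E1 E2.
  assert (Hb : b * E1 = a * E2) by lra.
  f_equal.
  - transitivity (a * (E1 ^ 2 + E2 ^ 2)). rewrite HE; ring.
    replace (a * (E1 ^ 2 + E2 ^ 2)) with (a * E1 * E1 + (a * E2) * E2) by ring. rewrite <- Hb. ring.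
  - transitivity (b * (E1 ^ 2 + E2 ^ 2)). rewrite HE; ring.
    replace (b * (E1 ^ 2 + E2 ^ 2)) with ((b * E1) * E1 + b * E2 * E2) by ring. rewrite Hb. ring.
Qed.

Lemma good_4 z : Cmod z < 4 -> good (z + RtoC 4)%C.
Proof.
  intros H. left. destruct z as [a b]. destruct (Cmod_bounds a b).
  pose proof (Rle_abs (-a)). rewrite Rabs_Ropp in *. cbn [fst snd Cplus RtoC]. lra.
Qed.

Lemma good_pp k z : Dtheta theta z -> (k * k)%C = RtoC 4 -> good (pp k z).
Proof.
  intros [HM [_ HR]] Hk. pose proof (pp_rel k z Hk) as Rel.
  destruct (pp k z) as [P Q] eqn:Ep. destruct z as [a b].
  destruct (Cmod_bounds a b) as [Ha _].
  pose proof (Rle_abs (-a)). pose proof (Rle_abs a). rewrite Rabs_Ropp in *.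
  unfold good. cbn [fst snd].
  destruct (Rlt_dec 0 P) as [Hp|Hp]; [left; auto|right].
  intro HQ. subst Q.
  apply (f_equal fst) in Rel as R1. apply (f_equal snd) in Rel as R2.
  unfold Cmult, Cminus, Cplus, Copp, RtoC in R1, R2. cbn [fst snd] in R1, R2.
  ring_simplify in R1. ring_simplify in R2.
  assert (HP3 : 3 + P <> 0). { intro E. assert (P = -3) by lra. subst P. nra. }
  assert (Hb : b = 0). { assert (Hb0 : b * (3 + P) = 0) by nra. apply Rmult_integral in Hb0. destruct Hb0; [auto| lra]. }
  subst b. apply HR. split. reflexivity. cbn [fst].
  destruct (Rlt_dec 0 (3 + P)).
  - nra.
  - exfalso. assert (Hneg : (a + 4) * (3 + P) < 0) by (apply Rmult_pos_neg; lra). pose proof (Rle_0_sqr (P+7)) as Hsq. unfold Rsqr in Hsq. nra.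
Qed.

Lemma Cmod_ee : Cmod ee = 1.
Proof. unfold ee. rewrite Cmod_ab. replace ((ch ^ 2 - sh ^ 2) ^ 2 + (- (2 * sh * ch)) ^ 2) with 1. apply sqrt_1.
  rewrite <- E12. ring. Qed.

Lemma Cmod_cc : Cmod cc = 1.
Proof. unfold cc. rewrite Cmod_ab. replace (sh ^ 2 + (- ch) ^ 2) with 1. apply sqrt_1.
  rewrite <- shch. ring. Qed.

Lemma a0_bounds : 0.28 < sqrt (1/12) < 0.29.
Proof.
  split.
  - rewrite <- (sqrt_square 0.28) by lra. apply sqrt_lt_1_alt. lra.
  - rewrite <- (sqrt_square 0.29) by lra. apply sqrt_lt_1_alt. lra.
Qed.

Lemma b0_bounds : 2 < sqrt (1/12 + 4) < 2.03.
Proof.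
  split.
  - rewrite <- (sqrt_square 2) by lra. apply sqrt_lt_1_alt. lra.
  - rewrite <- (sqrt_square 2.03) by lra. apply sqrt_lt_1_alt. lra.
Qed.

Lemma a0b0 : sqrt (1/12) * sqrt (1/12 + 4) = 7/12.
Proof.
  rewrite <- sqrt_mult_alt by lra. rewrite <- (sqrt_square (7/12)) by lra. f_equal. field.
Qed.

Lemma near_facts z : 0 < sh -> Cmod (z - RtoC (1/12)) < sh ^ 2 / 1000 ->
  0 < fst (Csqrt (- (z * ee)))%C /\ Cmod (gg z - RtoC (7/12)) < 1/100.
Proof.
  intros Hs Hd. set (d := Cmod (z - RtoC (1/12))) in *.
  assert (Hd0 : 0 <= d) by apply Cmod_ge_0.
  pose proof shch as Hsc. assert (Hs1 : sh <= 1) by nra.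
  pose proof a0_bounds as [Ha1 Ha2]. pose proof b0_bounds as [Hb1 Hb2].
  set (a0 := sqrt (1/12)) in *. set (b0 := sqrt (1/12 + 4)) in *.
  set (w := Csqrt (- (z * ee))%C). set (v0 := Csqrt (- (RtoC (1/12) * ee))%C).
  assert (Hv0 : v0 = (a0 * sh, a0 * ch)) by (apply Csqrt_half; lra).
  assert (Hfv0 : fst v0 = a0 * sh) by (rewrite Hv0; reflexivity).
  assert (Hlip1 : Cmod (w - v0) * (a0 * sh) <= d).
  { rewrite <- Hfv0. eapply Rle_trans. apply sqrt_lip.
    replace (- (z * ee) - - (RtoC (1 / 12) * ee))%C with (- ((z - RtoC (1/12)) * ee))%C by ring.
    rewrite Cmod_opp, Cmod_mult, Cmod_ee. fold d. lra. }
  set (e1 := Cmod (w - v0)) in *. assert (He1 : 0 <= e1) by apply Cmod_ge_0.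
  assert (He1b : e1 * a0 <= sh / 1000).
  { assert (e1 * a0 * sh <= sh * (sh / 1000)) by nra. nra. }
  split.
  - assert (H : fst (v0 - w)%C <= e1).
    { unfold e1. replace (w - v0)%C with (- (v0 - w))%C by ring. rewrite Cmod_opp. apply Cmod_Re_le. }
    change (fst v0 - fst w <= e1) in H. rewrite Hfv0 in H.
    assert (Hx : 0.28 * sh < a0 * sh) by nra.
    assert (e1 < 0.0036 * sh).
    { destruct (Rlt_dec e1 (0.0036 * sh)) as [Hl|Hl]; auto.
      assert (0 <= (e1 - 0.0036 * sh) * a0) by (apply Rmult_le_pos; lra). nra. }
    assert (Hy : 0.0036 * sh < a0 * sh) by nra. lra.
  - set (A := RtoC a0). set (B := RtoC b0).
    assert (HsqA : sq (RtoC (1/12)) = A) by (apply sq_real; lra).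
    assert (Hr4B : r4 (RtoC (1/12)) = B) by (apply r4_real; lra).
    assert (Hsq : (sq z - A)%C = (cc * (w - v0))%C).
    { rewrite <- HsqA. unfold sq. fold w v0. ring. }
    assert (Hlip2 : Cmod (r4 z - B) * b0 <= d).
    { rewrite <- Hr4B. unfold r4. 
      replace b0 with (fst (Csqrt (RtoC (1/12) + RtoC 4)%C)).
      eapply Rle_trans. apply sqrt_lip. right. unfold d. f_equal. ring.
      replace (RtoC (1/12) + RtoC 4)%C with (RtoC (1/12 + 4)) by (unfold RtoC, Cplus; cbn [fst snd]; f_equal; ring).
      rewrite Csqrt_realC by lra. reflexivity. }
    set (e2 := Cmod (r4 z - B)) in *. assert (He2 : 0 <= e2) by apply Cmod_ge_0.
    assert (He2b : e2 <= 0.0005) by nra.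
    assert (Hr4z : Cmod (r4 z) <= b0 + e2).
    { replace (r4 z) with ((r4 z - B) + B)%C by ring. eapply Rle_trans. apply Cmod_triangle.
      assert (HB : Cmod B = b0) by (unfold B; rewrite Cmod_R; apply Rabs_right; lra). rewrite HB. fold e2. lra. }
    assert (E : (gg z - RtoC (7/12))%C = ((sq z - A) * r4 z + A * (r4 z - B))%C).
    { replace (RtoC (7/12)) with (A * B)%C. unfold gg. ring.
      unfold A, B. rewrite <- RtoC_mult. f_equal. apply a0b0. }
    rewrite E. eapply Rle_lt_trans. apply Cmod_triangle.
    rewrite !Cmod_mult, Hsq, Cmod_mult, Cmod_cc. fold e1 e2.
    unfold A. rewrite Cmod_R, Rabs_right by lra.
    assert (e1 < 0.0036).
    { destruct (Rlt_dec e1 0.0036) as [Hl|Hl]; auto.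
      assert (0 <= (e1 - 0.0036) * a0) by (apply Rmult_le_pos; lra). nra. }
    assert (0 <= Cmod (r4 z)) by apply Cmod_ge_0.
    assert (e1 * Cmod (r4 z) <= 0.0036 * 2.04) by nra.
    assert (a0 * e2 <= 0.29 * 0.0005) by nra.
    lra.
Qed.

Lemma asym z : 0 < sh -> Cmod (z - RtoC (1/12)) < sh ^ 2 / 1000 ->
  Cmod (UU (RtoC (-2)) z - (RtoC 2 - RtoC (sqrt (12/7)) * Csqrt (RtoC 1 - RtoC 12 * z)))
  <= 4 * Cmod (RtoC 1 - RtoC 12 * z).
Proof.
  intros Hs Hd. destruct (near_facts z Hs Hd) as [_ Hg].
  pose proof shch as Hsc. assert (Hs1 : sh ^ 2 <= 1) by nra.
  set (d := Cmod (z - RtoC (1/12))) in *.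
  set (p := pp (RtoC (-2)) z).
  assert (Hk : (RtoC (-2) * RtoC (-2))%C = RtoC 4).
  { rewrite <- RtoC_mult. f_equal. ring. }
  assert (Rel := pp_rel _ z Hk). fold p in Rel.
  assert (Rel2 : ((RtoC 1 - RtoC 12 * z) * (RtoC 3 + p))%C = (p * (RtoC 7 - RtoC 3 * p))%C).
  { transitivity ((RtoC 3 + p) - RtoC 3 * (RtoC 4 * z * (RtoC 3 + p)))%C. ring.
    rewrite <- Rel. ring. }
  assert (Hc0 : (RtoC 1 + RtoC 2 * RtoC (1/12) - RtoC 2 * RtoC (7/12))%C = RtoC 0).
  { unfold RtoC, Cplus, Cmult, Copp, Cminus. apply injective_projections; simpl; field. }
  assert (Hp : Cmod p < 0.03).
  { assert (Ep : p = (RtoC 2 * (z - RtoC (1/12)) - RtoC 2 * (gg z - RtoC (7/12)) +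
                     (RtoC 1 + RtoC 2 * RtoC (1/12) - RtoC 2 * RtoC (7/12)))%C).
    { unfold p, pp. ring. }
    rewrite Hc0 in Ep. rewrite Ep.
    eapply Rle_lt_trans. apply Cmod_triangle. rewrite Cmod_0.
    eapply Rle_lt_trans. apply Rplus_le_compat_r. apply Cmod_triangle.
    rewrite Cmod_opp, !Cmod_mult, Cmod_R, Rabs_right by lra. fold d. lra. }
  assert (Hp0 : 0 <= Cmod p) by apply Cmod_ge_0.
  set (w := (RtoC 1 - RtoC 12 * z)%C) in *.
  assert (Hpw : Cmod p <= Cmod w).
  { assert (M : Cmod w * Cmod (RtoC 3 + p) = Cmod p * Cmod (RtoC 7 - RtoC 3 * p)).
    { rewrite <- !Cmod_mult. rewrite Rel2. reflexivity. }
    assert (L1 : Cmod (RtoC 3 + p) <= 3 + Cmod p).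
    { eapply Rle_trans. apply Cmod_triangle. rewrite Cmod_R, Rabs_right by lra. lra. }
    assert (L2 : 7 - 3 * Cmod p <= Cmod (RtoC 7 - RtoC 3 * p)).
    { assert (Cmod (RtoC 7) <= Cmod (RtoC 7 - RtoC 3 * p) + Cmod (RtoC 3 * p)).
      { replace (RtoC 7) with ((RtoC 7 - RtoC 3 * p) + RtoC 3 * p)%C at 1 by ring. apply Cmod_triangle. }
      rewrite Cmod_mult, !Cmod_R, !Rabs_right in H by lra. lra. }
    assert (0 <= Cmod w) by apply Cmod_ge_0.
    assert (0 <= Cmod (RtoC 3 + p)) by apply Cmod_ge_0.
    nra. }
  set (q := Csqrt p). set (t := Csqrt w). set (be := sqrt (12/7)).
  assert (Hbe : be * be = 12/7) by (apply sqrt_sqrt; lra).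
  assert (Hbe0 : 0 < be) by (apply sqrt_lt_R0; lra).
  assert (Hsign : 0 <= snd q * snd t).
  { assert (Hrel_im := f_equal snd Rel).
    destruct p as [P Q] eqn:Ep. destruct z as [A B].
    unfold Cmult, Cminus, Cplus, Copp, RtoC in Hrel_im. cbn [fst snd] in Hrel_im.
    assert (HP : Rabs P <= Cmod (P, Q)) by apply Cmod_bounds.
    assert (HA : Rabs (A - 1/12) <= d).
    { unfold d. replace (A - 1/12) with (fst ((A, B) - RtoC (1/12))%C) by (simpl; ring).
      pose proof (re_le_Cmod ((A, B) - RtoC (1 / 12))%C). unfold Re in H. exact H. }
    pose proof (Rle_abs P). pose proof (Rle_abs (-P)). rewrite Rabs_Ropp in *.
    pose proof (Rle_abs (A - 1/12)). pose proof (Rle_abs (-(A - 1/12))). rewrite Rabs_Ropp in *.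
    assert (Hd' : d < 0.001) by nra.
    assert (Him : 4 * B * (3 + P) = - Q * (2 * (1 - P) + 4 * A)) by nra.
    assert (Hw2 : snd w = - (12 * B)) by (unfold w; simpl; ring).
    assert (HX : 0 < 3 + P) by lra. assert (HY : 0 < 2 * (1 - P) + 4 * A) by lra.
    destruct (Rle_dec 0 Q) as [HQ|HQ].
    - assert (Hq2 : 0 <= snd q) by (unfold q; apply Csqrt_im_pos; simpl; lra).
      assert (B <= 0).
      { destruct (Rle_dec B 0); auto. exfalso.
        assert (0 < 4 * B * (3 + P)) by (apply Rmult_lt_0_compat; lra).
        assert (0 <= Q * (2 * (1 - P) + 4 * A)) by (apply Rmult_le_pos; lra). lra. }
      assert (Ht2 : 0 <= snd t) by (unfold t; apply Csqrt_im_pos; lra).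
      nra.
    - assert (Hq2 : snd q <= 0) by (unfold q; apply Csqrt_im_neg; simpl; lra).
      assert (0 < B).
      { destruct (Rlt_dec 0 B); auto. exfalso.
        assert (4 * B * (3 + P) <= 0).
        { assert (0 <= (- B) * (3 + P)) by (apply Rmult_le_pos; lra). lra. }
        assert (0 < (- Q) * (2 * (1 - P) + 4 * A)) by (apply Rmult_lt_0_compat; lra). lra. }
      assert (Ht2 : snd t <= 0) by (unfold t; apply Csqrt_im_neg; lra).
      nra. }
  assert (Hq1 : 0 <= fst q) by apply Csqrt_re_nonneg.
  assert (Ht1 : 0 <= fst t) by apply Csqrt_re_nonneg.
  set (X := (RtoC 2 * q - RtoC be * t)%C). set (Y := (RtoC 2 * q + RtoC be * t)%C).
  assert (HXY : Cmod X <= Cmod Y).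
  { unfold X, Y. destruct q as [q1 q2]. destruct t as [t1 t2]. cbn [fst snd] in *.
    unfold RtoC, Cmult, Cplus, Cminus, Copp. cbn [fst snd]. rewrite !Cmod_ab.
    apply sqrt_le_1_alt. simpl. assert (0 <= be * (q1*t1 + q2*t2)) by (apply Rmult_le_pos; nra). nra. }
  assert (Hqq : (q * q)%C = p) by apply Csqrt_sq.
  assert (Htt : (t * t)%C = w) by apply Csqrt_sq.
  assert (Hc7 : (RtoC 7 * (RtoC be * RtoC be))%C = RtoC 12).
  { rewrite <- !RtoC_mult. f_equal. rewrite Hbe. field. }
  assert (EXY : (RtoC 7 * (RtoC 3 + p) * (X * Y))%C = (RtoC 64 * (p * p))%C).
  { transitivity (RtoC 28 * (q * q) * (RtoC 3 + p) - (RtoC 7 * (RtoC be * RtoC be)) * ((t * t) * (RtoC 3 + p)))%C.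
    unfold X, Y. ring.
    rewrite Hc7, Hqq, Htt, Rel2. ring. }
  apply (f_equal Cmod) in EXY. rewrite !Cmod_mult, !Cmod_R, !Rabs_right in EXY by lra.
  assert (L1 : 3 - Cmod p <= Cmod (RtoC 3 + p)).
  { assert (Cmod (RtoC 3) <= Cmod (RtoC 3 + p) + Cmod p).
    { replace (RtoC 3) with ((RtoC 3 + p) + - p)%C at 1 by ring. eapply Rle_trans. apply Cmod_triangle. rewrite Cmod_opp. lra. }
    rewrite Cmod_R, Rabs_right in H by lra. lra. }
  assert (HX0 : 0 <= Cmod X) by apply Cmod_ge_0.
  assert (HXb : Cmod X * Cmod X <= 4 * (Cmod p * Cmod p)).
  { assert (Cmod X * Cmod X <= Cmod X * Cmod Y) by nra.
    assert (7 * 2.9 * (Cmod X * Cmod Y) <= 64 * (Cmod p * Cmod p)).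
    { assert (0 <= Cmod X * Cmod Y) by (apply Rmult_le_pos; auto; apply Cmod_ge_0). nra. }
    nra. }
  assert (HXp : Cmod X <= 2 * Cmod p) by nra.
  assert (H1q : 1 <= Cmod (RtoC 1 + q)).
  { eapply Rle_trans; [|apply Cmod_Re_le]. change (1 <= 1 + fst q). lra. }
  assert (H1q0 : (RtoC 1 + q)%C <> RtoC 0).
  { intro E. rewrite E, Cmod_0 in H1q. lra. }
  assert (EU : (UU (RtoC (-2)) z - (RtoC 2 - RtoC be * t))%C = (RtoC 2 * p * / (RtoC 1 + q) - X)%C).
  { unfold UU. fold p q. rewrite <- Hqq. unfold X. field. auto. }
  rewrite EU. eapply Rle_trans. 
  { replace (RtoC 2 * p * / (RtoC 1 + q) - X)%C with (RtoC 2 * p * / (RtoC 1 + q) + - X)%C by ring.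
    apply Cmod_triangle. }
  rewrite Cmod_opp, !Cmod_mult, Cmod_inv by auto. rewrite Cmod_R, Rabs_right by lra.
  assert (/ Cmod (RtoC 1 + q) <= 1).
  { pose proof (Rinv_le_contravar 1 (Cmod (RtoC 1 + q)) ltac:(lra) H1q) as Hi. rewrite Rinv_1 in Hi. exact Hi. }
  assert (0 < / Cmod (RtoC 1 + q)) by (apply Rinv_0_lt_compat; lra).
  nra.
Qed.
End Main.

Lemma Kr_formula x q : 1 + q <> 0 ->
  Kr x (2 / (1 + q)) = (2 / (1 + q)) ^ 4 * (((1 - q^2)/4)^2 + x * ((1 - q^2)/4) - x).
Proof. intros. unfold Kr. field. auto. Qed.

Lemma root_gen x k : 0 < x -> k * k = 4 -> 0 <= 1 + 2 * x + k * (sqrt x * sqrt (x + 4)) ->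
  Kr x (2 / (1 + sqrt (1 + 2 * x + k * (sqrt x * sqrt (x + 4))))) = 0.
Proof.
  intros Hx Hk HP.
  set (G := sqrt x * sqrt (x + 4)).
  assert (HG : G * G = x * (x + 4)).
  { unfold G. replace (sqrt x * sqrt (x + 4) * (sqrt x * sqrt (x + 4))) with ((sqrt x * sqrt x) * (sqrt (x+4) * sqrt (x+4))) by ring.
    rewrite !sqrt_sqrt; lra. }
  set (P := 1 + 2 * x + k * G) in *.
  set (q := sqrt P).
  assert (Hq : q * q = P) by (apply sqrt_sqrt; auto).
  assert (0 <= q) by apply sqrt_pos.
  rewrite Kr_formula by lra.
  replace (((1 - q ^ 2) / 4) ^ 2 + x * ((1 - q ^ 2) / 4) - x) with 0. ring.
  replace (q ^ 2) with P by (simpl; lra). unfold P.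
  transitivity ((k * k) * (G * G) / 16 - x * (x + 4) / 4). 2: field.
  rewrite Hk, HG. field.
Qed.

Lemma sqrtG_bounds x : 0 < x -> x < sqrt x * sqrt (x + 4).
Proof.
  intros Hx. rewrite <- sqrt_mult_alt by lra. rewrite <- (sqrt_square x) at 1 by lra.
  apply sqrt_lt_1_alt. nra.
Qed.

Lemma sqrtG_upper x : 0 < x -> x < 1/12 -> sqrt x * sqrt (x + 4) < x + 1/2.
Proof.
  intros Hx Hx2. rewrite <- sqrt_mult_alt by lra. rewrite <- (sqrt_square (x + 1/2)) by lra.
  apply sqrt_lt_1_alt. nra.
Qed.

Lemma root1 x : 0 < x < 1/12 -> exists y, 1 < y < 2 /\ Kr x y = 0 /\
   y = 2 / (1 + sqrt (1 + 2 * x + (-2) * (sqrt x * sqrt (x + 4)))) /\ 0 <= 1 + 2 * x + (-2) * (sqrt x * sqrt (x + 4)).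
Proof.
  intros [H1 H2]. pose proof (sqrtG_bounds x H1). pose proof (sqrtG_upper x H1 H2).
  set (P := 1 + 2 * x + (-2) * (sqrt x * sqrt (x + 4))).
  assert (HP0 : 0 < P) by (unfold P; lra). assert (HP1 : P < 1) by (unfold P; lra).
  exists (2 / (1 + sqrt P)). split; [|split; [apply root_gen; lra|split; [reflexivity|lra]]].
  assert (0 < sqrt P) by (apply sqrt_lt_R0; lra).
  assert (sqrt P < 1) by (rewrite <- sqrt_1; apply sqrt_lt_1_alt; lra).
  split; [apply Rmult_lt_reg_r with (1 + sqrt P); [lra|]; field_simplify; lra | apply Rmult_lt_reg_r with (1 + sqrt P); [lra|]; field_simplify; lra].
Qed.

Lemma root2 x : 0 < x < 1/12 -> exists y, 0 < y < 1 /\ Kr x y = 0 /\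
   y = 2 / (1 + sqrt (1 + 2 * x + 2 * (sqrt x * sqrt (x + 4)))) /\ 0 <= 1 + 2 * x + 2 * (sqrt x * sqrt (x + 4)).
Proof.
  intros [H1 H2]. pose proof (sqrtG_bounds x H1).
  set (P := 1 + 2 * x + 2 * (sqrt x * sqrt (x + 4))).
  assert (HP1 : 1 < P) by (unfold P; lra).
  exists (2 / (1 + sqrt P)). split; [|split; [apply root_gen; lra|split; [reflexivity|lra]]].
  assert (1 < sqrt P) by (rewrite <- sqrt_1; apply sqrt_lt_1_alt; lra).
  split. apply Rdiv_lt_0_compat; lra.
  apply Rmult_lt_reg_r with (1 + sqrt P); [lra|]; field_simplify; lra.
Qed.

Lemma val_u2 : 2 / (1 + sqrt (1 + 2 * (1/12) + 2 * (sqrt (1/12) * sqrt (1/12 + 4)))) = (-3 + sqrt 21) / 2.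
Proof.
  rewrite a0b0. replace (1 + 2 * (1 / 12) + 2 * (7 / 12)) with (7/3) by field.
  assert (H21 : sqrt 21 = 3 * sqrt (7/3)).
  { replace 21 with (3 * 3 * (7/3)) by field. rewrite sqrt_mult_alt by lra. rewrite sqrt_square by lra. reflexivity. }
  rewrite H21. assert (Hs : sqrt (7/3) * sqrt (7/3) = 7/3) by (apply sqrt_sqrt; lra).
  assert (0 <= sqrt (7/3)) by apply sqrt_pos.
  set (s := sqrt (7/3)) in *.
  assert (E : (-3 + 3 * s) * (1 + s) = 4).
  { replace ((-3 + 3 * s) * (1 + s)) with (3 * (s * s) - 3) by ring. rewrite Hs. field. }
  replace ((-3 + 3 * s) / 2) with (((-3 + 3 * s) * (1 + s)) / (2 * (1 + s))) by (field; lra).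
  rewrite E. field. lra.
Qed.

Theorem lemma4p8 (theta : R) (Htheta : 0 < theta < 2 * PI) :
  exists U1 U2 : C -> C,
    (* analytic continuations on D(theta) of u1 and u2 *)
    holomorphic_on (Dtheta theta) U1 /\
    holomorphic_on (Dtheta theta) U2 /\
    (forall x : R, 0 < x < 1 / 12 ->
       exists y : R, 1 < y < 2 /\ Kr x y = 0 /\ U1 (RtoC x) = RtoC y) /\
    (forall x : R, 0 < x < 1 / 12 ->
       exists y : R, 0 < y < 1 /\ Kr x y = 0 /\ U2 (RtoC x) = RtoC y) /\
    (* u2 is analytic at 1/12 with value (-3 + sqrt 21)/2 *)
    (exists (r : R) (V : C -> C),
       0 < r /\
       holomorphic_on (fun z => Cmod (Cminus z (RtoC (1 / 12))) < r) V /\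
       (forall z, Dtheta theta z -> Cmod (Cminus z (RtoC (1 / 12))) < r ->
          V z = U2 z) /\
       V (RtoC (1 / 12)) = RtoC ((-3 + sqrt 21) / 2)) /\
    (* u1(z) = 2 - sqrt(12/7) sqrt(1 - 12 z) + O(1 - 12 z) as z -> 1/12 in D(theta) *)
    (exists (M delta : R),
       0 < delta /\
       forall z, Dtheta theta z -> Cmod (Cminus z (RtoC (1 / 12))) < delta ->
         Cmod (Cminus (U1 z)
                 (Cminus (RtoC 2)
                    (Cmult (RtoC (sqrt (12 / 7)))
                           (Csqrt (Cminus (RtoC 1) (Cmult (RtoC 12) z))))))
         <= M * Cmod (Cminus (RtoC 1) (Cmult (RtoC 12) z))).
Proof.
  assert (Hs : 0 < sh theta).
  { unfold sh. apply sin_gt_0; lra. }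
  assert (Hkm : (RtoC (-2) * RtoC (-2))%C = RtoC 4) by (rewrite <- RtoC_mult; f_equal; ring).
  assert (Hkp : (RtoC 2 * RtoC 2)%C = RtoC 4) by (rewrite <- RtoC_mult; f_equal; ring).
  assert (Hr : 0 < sh theta ^ 2 / 1000) by (apply Rdiv_lt_0_compat; [apply pow_lt|]; lra).
  exists (UU theta (RtoC (-2))), (UU theta (RtoC 2)).
  split; [|split; [|split; [|split; [|split]]]].
  - intros z Hz. apply hol_UU. apply good_ray; auto. apply good_4; apply Hz. apply good_pp; auto.
  - intros z Hz. apply hol_UU. apply good_ray; auto. apply good_4; apply Hz. apply good_pp; auto.
  - intros x Hx. destruct (root1 x Hx) as [y [Hy [HK [Ey HP]]]]. exists y. split; auto. split; auto.
    rewrite UU_real by (auto; lra). rewrite Ey. reflexivity.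
  - intros x Hx. destruct (root2 x Hx) as [y [Hy [HK [Ey HP]]]]. exists y. split; auto. split; auto.
    rewrite UU_real by (auto; lra). rewrite Ey. reflexivity.
  - exists (sh theta ^ 2 / 1000), (UU theta (RtoC 2)). split; [auto|split; [|split]].
    + intros z Hz. destruct (near_facts theta z Hs Hz) as [H1 H2].
      apply hol_UU. apply good_of_re; auto.
      apply good_4. 
      { replace z with ((z - RtoC (1/12)) + RtoC (1/12))%C by ring. eapply Rle_lt_trans. apply Cmod_triangle.
        rewrite Cmod_R, Rabs_right by lra. pose proof (sh_le theta). nra. }
      left.
      pose proof (Cmod_Re_le (RtoC (7/12) - gg theta z)%C) as Hq1.
      assert (Ef1 : fst (RtoC (7/12) - gg theta z)%C = 7/12 - fst (gg theta z)) by (destruct (gg theta z); simpl; ring).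
      rewrite Ef1 in Hq1.
      replace (RtoC (7/12) - gg theta z)%C with (- (gg theta z - RtoC (7/12)))%C in Hq1 by ring.
      rewrite Cmod_opp in Hq1.
      pose proof (Cmod_Re_le (RtoC (1/12) - z)%C) as Hq2.
      assert (Ef2 : fst (RtoC (1/12) - z)%C = 1/12 - fst z) by (destruct z; simpl; ring).
      rewrite Ef2 in Hq2.
      replace (RtoC (1/12) - z)%C with (- (z - RtoC (1/12)))%C in Hq2 by ring.
      rewrite Cmod_opp in Hq2.
      pose proof (sh_le theta).
      assert (Hf : fst (pp theta (RtoC 2) z) = 1 + 2 * fst z + 2 * fst (gg theta z)).
      { unfold pp. destruct z as [a b]. destruct (gg theta (a, b)) as [g1 g2]. simpl. ring. }
      rewrite Hf. nra.
    + intros; reflexivity.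
    + rewrite UU_real by (auto; try lra; pose proof (sqrt_pos (1/12)); pose proof (sqrt_pos (1/12+4)); nra).
      f_equal. apply val_u2.
  - exists 4, (sh theta ^ 2 / 1000). split; auto. intros z _ Hz. apply asym; auto.
Qed.
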